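(* Let $m\ge 1$ and let $s_1,\dots,s_{2m}$ be positive integers (an instance of \textsc{Exact Partition}). Put $S=\sum_{i=1}^{2m}s_i$, $s_{\max}=\max_i s_i$, $M=S+1$, $d_i=s_{\max}-s_i$ for $i=1,\dots,2m$, and $\epsilon=\frac{1}{2M}$. Let $$P_R=\Big\{x\in\mathbb{R}^{2m}:\ 0\le x_i\le 1\ (i=1,\dots,2m),\ \sum_{i=1}^{2m}(M+s_i)x_i\le \tfrac12 S+mM+\epsilon,\ \sum_{i=1}^{2m}(M+d_i)x_i\le \tfrac12\sum_{i=1}^{2m}d_i+mM+\epsilon\Big\}.$$ If there is no $i\in\{1,\dots,2m\}$ with $s_i=\frac{s_{\max}}{2}$, then $P_R$ is a simple polytope, i.e. at every vertex of $P_R$ exactly $2m$ of its $4m+2$ defining inequalities are active.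
   Context: The polytope $P_R$ is the linear programming relaxation of the Frieze–Teng integer programming formulation of \textsc{Exact Partition}. The inequalities $0\le x_i\le 1$ are called box constraints, and the two remaining inequalities (K1) $\sum(M+s_i)x_i\le \frac12 S+mM+\epsilon$ and (K2) $\sum(M+d_i)x_i\le \frac12\sum d_i+mM+\epsilon$ are the knapsack constraints. A vertex is degenerate if more than $2m$ of the defining inequalities are active at it; the polytope is simple (non-degenerate) if it has no degenerate vertex. *)

(* Defs.v *)
From HB Require Import structures.
From mathcomp Require Import all_boot all_order all_algebra.
From mathcomp Require Import reals.
Set Implicit Arguments. Unset Strict Implicit. Unset Printing Implicit Defensive.
Import Order.TTheory GRing.Theory Num.Theory.
Local Open Scope ring_scope.

Definition S_tot (m : nat) (s : 'I_(2 * m) -> nat) : nat := (\sum_i s i)%N.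
Definition smax (m : nat) (s : 'I_(2 * m) -> nat) : nat := (\max_i s i)%N.
Definition Mbig (m : nat) (s : 'I_(2 * m) -> nat) : nat := (S_tot s).+1.
Definition dd (m : nat) (s : 'I_(2 * m) -> nat) (i : 'I_(2 * m)) : nat :=
  (smax s - s i)%N.
Definition eps {R : realType} (m : nat) (s : 'I_(2 * m) -> nat) : R :=
  1 / (2 * (Mbig s)%:R).

(* Index set of the 4m+2 defining inequalities:
   inl (inl i) : x_i >= 0 ;  inl (inr i) : x_i <= 1 ;
   inr false   : (K1)     ;  inr true    : (K2). *)
Definition cidx (m : nat) : finType := (('I_(2 * m) + 'I_(2 * m)) + bool)%type.

Definition K1lhs {R : realType} m (s : 'I_(2 * m) -> nat) (x : 'rV[R]_(2 * m)) : R :=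
  \sum_i ((Mbig s)%:R + (s i)%:R) * x 0 i.
Definition K1rhs {R : realType} m (s : 'I_(2 * m) -> nat) : R :=
  (S_tot s)%:R / 2 + m%:R * (Mbig s)%:R + eps s.
Definition K2lhs {R : realType} m (s : 'I_(2 * m) -> nat) (x : 'rV[R]_(2 * m)) : R :=
  \sum_i ((Mbig s)%:R + (dd s i)%:R) * x 0 i.
Definition K2rhs {R : realType} m (s : 'I_(2 * m) -> nat) : R :=
  (\sum_i dd s i)%:R / 2 + m%:R * (Mbig s)%:R + eps s.

Definition holds {R : realType} m (s : 'I_(2 * m) -> nat) (x : 'rV[R]_(2 * m))
    (c : cidx m) : Prop :=
  match c with
  | inl (inl i) => 0 <= x 0 i
  | inl (inr i) => x 0 i <= 1
  | inr false => K1lhs s x <= @K1rhs R m s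
  | inr true => K2lhs s x <= @K2rhs R m s
  end.

Definition active {R : realType} m (s : 'I_(2 * m) -> nat) (x : 'rV[R]_(2 * m))
    (c : cidx m) : bool :=
  match c with
  | inl (inl i) => x 0 i == 0
  | inl (inr i) => x 0 i == 1
  | inr false => K1lhs s x == @K1rhs R m s
  | inr true => K2lhs s x == @K2rhs R m s
  end.

Definition PR {R : realType} m (s : 'I_(2 * m) -> nat) (x : 'rV[R]_(2 * m)) : Prop :=
  forall c : cidx m, holds s x c.

Definition is_vertex {R : realType} m (s : 'I_(2 * m) -> nat) (x : 'rV[R]_(2 * m)) : Prop :=
  PR s x /\
  forall (y z : 'rV[R]_(2 * m)) (t : R),
    PR s y -> PR s z -> 0 < t < 1 -> x = t *: y + (1 - t) *: z -> y = z.

Definition simple_PR (R : realType) m (s : 'I_(2 * m) -> nat) : Prop :=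
  forall x : 'rV[R]_(2 * m), is_vertex s x ->
    #|[pred c : cidx m | active s x c]| = (2 * m)%N.

(* Main.v *)
Require Import Defs.
From HB Require Import structures.
From mathcomp Require Import all_boot all_order all_algebra.
From mathcomp Require Import reals.
Set Warnings "-notation-overridden,-ambiguous-paths".
From mathcomp Require Import lra ring zify.
Set Implicit Arguments. Unset Strict Implicit. Unset Printing Implicit Defensive.
Import Order.TTheory GRing.Theory Num.Theory.
Local Open Scope ring_scope.

Lemma arith0 (R : realType) (N C m M : nat) : (2 <= M)%N ->
  (N%:R : R) <> C%:R / 2 + m%:R * M%:R + 1 / (2 * M%:R).
Proof.
move=> hM h.
have hM0 : (M%:R : R) != 0 by rewrite pnatr_eq0; lia.
have : ((2 * M * N)%N%:R : R) = (M * (C + 2 * m * M) + 1)%N%:R.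
  rewrite !natrD !natrM h; field; done.
move/eqP; rewrite eqr_nat => /eqP e.
have := congr1 (modn^~ M) e.
have -> : (2 * M * N = 2 * N * M)%N by lia.
rewrite modnMl [(M * _)%N]mulnC modnMDl modn_small //; lia.
Qed.

Lemma arith1 (R : realType) (A1 A2 C1 C2 c1 c2 m M : nat) (y : R) :
  (c1 < M)%N -> (c2 < M)%N -> c1 <> c2 ->
  A1%:R + (M + c1)%:R * y = C1%:R / 2 + m%:R * M%:R + 1 / (2 * M%:R) ->
  A2%:R + (M + c2)%:R * y = C2%:R / 2 + m%:R * M%:R + 1 / (2 * M%:R) -> False.
Proof.
move=> h1 h2 hne e1 e2.
have hM0 : (M%:R : R) != 0 by rewrite pnatr_eq0; lia.
pose P1 := (2 * c1 * A1 + c2 * (C1 + 2 * m * M) + (M + c1) * (C1 + 2 * A2))%N.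
pose P2 := (2 * c2 * A1 + c1 * (C1 + 2 * m * M) + (M + c1) * (C2 + 2 * A1))%N.
have : ((M * P1 + c2)%N%:R : R) = (M * P2 + c1)%N%:R.
  apply/eqP; rewrite -subr_eq0; apply/eqP.
  set E1 := (A1%:R + (M + c1)%:R * y - (C1%:R / 2 + m%:R * M%:R + 1 / (2 * M%:R))) : R.
  set E2 := (A2%:R + (M + c2)%:R * y - (C2%:R / 2 + m%:R * M%:R + 1 / (2 * M%:R))) : R.
  have z1 : E1 = 0 by rewrite /E1 e1 subrr.
  have z2 : E2 = 0 by rewrite /E2 e2 subrr.
  have -> : ((M * P1 + c2)%N%:R - (M * P2 + c1)%N%:R : R) =
     2 * M%:R * (c1%:R - c2%:R) * E1 - 2 * (M + c1)%:R * M%:R * (E1 - E2).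
    rewrite /E1 /E2 /P1 /P2 !natrD !natrM; field; done.
  by rewrite z1 z2; ring.
move/eqP; rewrite eqr_nat => /eqP e.
have := congr1 (modn^~ M) e.
rewrite ![(M * _)%N]mulnC !modnMDl !modn_small //; lia.
Qed.

Lemma ker_exists (F : fieldType) (r q : nat) (A : 'M[F]_(r, q)) :
  (q < r)%N -> exists2 v : 'rV[F]_r, v != 0 & v *m A = 0.
Proof.
move=> hqr.
have hk : \rank (kermx A) = (r - \rank A)%N := mxrank_ker A.
have hA := rank_leq_col A.
have hK : kermx A != 0.
  by rewrite -mxrank_eq0 hk; apply/eqP; lia.
have [i hi] : exists i, row i (kermx A) != 0.
  apply/existsP; apply: contraR hK; rewrite negb_exists => /forallP h.
  apply/eqP/row_matrixP => i; rewrite row0; exact/eqP/negPn/h.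
exists (row i (kermx A)) => //.
by rewrite -row_mul mulmx_ker row0.
Qed.

Section Pert.
Variables (R : realType) (m : nat) (s : 'I_(2 * m) -> nat).
Local Notation n := (2 * m)%N.

Definition gc (c : cidx m) (x : 'rV[R]_n) : R :=
  match c with
  | inl (inl i) => - x 0 i
  | inl (inr i) => x 0 i
  | inr false => K1lhs s x
  | inr true => K2lhs s x
  end.
Definition hc (c : cidx m) : R :=
  match c with
  | inl (inl i) => 0
  | inl (inr i) => 1
  | inr false => @K1rhs R m s
  | inr true => @K2rhs R m s
  end.

Lemma holds_gc x c : holds s x c <-> gc c x <= hc c.
Proof. by case: c => [[i|i]|[]] //=; rewrite oppr_le0. Qed.

Lemma active_gc x c : active s x c = (gc c x == hc c).
Proof. by case: c => [[i|i]|[]] //=; rewrite oppr_eq0. Qed.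

Lemma gc_lin c x d t : gc c (x + t *: d) = gc c x + t * gc c d.
Proof.
case: c => [[i|i]|[]] /=; rewrite ?mxE.
- by rewrite opprD mulrN.
- by [].
- rewrite /K2lhs mulr_sumr -big_split /=; apply: eq_bigr => i _.
  by rewrite !mxE; ring.
- rewrite /K1lhs mulr_sumr -big_split /=; apply: eq_bigr => i _.
  by rewrite !mxE; ring.
Qed.

Lemma pert (x d : 'rV[R]_n) : PR s x -> d != 0 ->
  (forall c, active s x c -> gc c d = 0) -> ~ is_vertex s x.
Proof.
move=> hx hd hact [_ hv].
pose dl c := if active s x c then 1 else (hc c - gc c x) / (`|gc c d| + 1).
have dlpos c : 0 < dl c.
  rewrite /dl; case: ifP => ha; first exact: ltr01.
  have := (holds_gc x c).1 (hx c); rewrite active_gc in ha.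
  move=> hle; apply: divr_gt0; last by rewrite ltr_wpDl.
  by rewrite subr_gt0 lt_neqAle ha hle.
pose del := 1 / (1 + \sum_c (dl c)^-1).
have Spos : 0 <= \sum_c (dl c)^-1 by apply: sumr_ge0 => c _; rewrite invr_ge0 ltW.
have delpos : 0 < del by rewrite /del divr_gt0 // ltr_wpDr.
have delle c : del <= dl c.
  have : (dl c)^-1 <= 1 + \sum_c (dl c)^-1.
    rewrite (bigD1 c) //= addrCA ler_wpDr // addr_ge0 //.
    by apply: sumr_ge0 => c' _; rewrite invr_ge0 ltW.
  rewrite /del => h.
  have h1 := dlpos c.
  rewrite ler_pdivrMr ?ltr_wpDr //.
  apply: le_trans (ler_wpM2l (ltW h1) h).
  by rewrite mulfV ?gt_eqF.
have good t : `|t| <= del -> PR s (x + t *: d).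
  move=> ht c; apply/holds_gc; rewrite gc_lin.
  case ha : (active s x c).
    rewrite (hact c ha) mulr0 addr0; move: ha; rewrite active_gc => /eqP -> //.
  have ha' := ha.
  have e : dl c * (`|gc c d| + 1) = hc c - gc c x.
    rewrite /dl ha' mulrVK //; rewrite unitfE; apply: lt0r_neq0; exact: ltr_wpDl.
  have h1 : t * gc c d <= `|t| * `|gc c d| by rewrite -normrM ler_norm.
  have h2 : `|t| * `|gc c d| <= dl c * `|gc c d|.
    by rewrite ler_wpM2r // (le_trans ht (delle c)).
  have h3 := dlpos c.
  nra.
have hn : `|del| <= del by rewrite ger0_norm // ltW.
have hn2 : `|- del| <= del by rewrite normrN ger0_norm // ltW.
have h12 : (0 : R) < (1/2 : R) < 1.
  have a1 : (0:R) < 1/2 by lra.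
  have a2 : (1/2 : R) < 1 by lra.
  by rewrite a1 a2.
have hxe : x = 1 / 2 *: (x + del *: d) + (1 - 1 / 2) *: (x + - del *: d).
  by apply/rowP => i; rewrite !mxE; field.
have := hv _ _ _ (good _ hn) (good _ hn2) h12 hxe.
move/rowP => e; move/negP: hd; apply; apply/eqP/rowP => i; rewrite [RHS]mxE.
have := e i; rewrite !mxE => e'.
have : 2 * del * d 0 i = 0 by lra.
move=> h; have -> : d 0 i = (2 * del)^-1 * (2 * del * d 0 i).
  by field; rewrite gt_eqF.
by rewrite h mulr0.
Qed.


Definition frac (x : 'rV[R]_n) i := (x 0 i != 0) && (x 0 i != 1).
Definition FF (x : 'rV[R]_n) := [set i | frac x i].

Lemma binary (x : 'rV[R]_n) i : PR s x -> ~~ frac x i -> x 0 i = (x 0 i == 1)%:R.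
Proof.
move=> hx; rewrite /frac negb_and !negbK; case/orP => /eqP ->; last by rewrite eqxx.
by rewrite eq_sym oner_eq0.
Qed.

Lemma lhs_split (c : 'I_n -> nat) (M : nat) (x : 'rV[R]_n) j : PR s x ->
  (forall i, i != j -> ~~ frac x i) ->
  \sum_i (M%:R + (c i)%:R) * x 0 i =
  ((\sum_(i | i != j) (M + c i) * (x 0%R i == 1%R))%N)%:R + (M + c j)%:R * x 0 j.
Proof.
move=> hx hb; rewrite (bigD1 j) //= addrC natr_sum natrD; congr (_ + _).
apply: eq_bigr => i hi; rewrite natrM natrD -binary //; exact: hb.
Qed.

Lemma lhs_all (c : 'I_n -> nat) (M : nat) (x : 'rV[R]_n) : PR s x ->
  (forall i, ~~ frac x i) ->
  \sum_i (M%:R + (c i)%:R) * x 0 i =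
  ((\sum_i (M + c i) * (x 0%R i == 1%R))%N)%:R.
Proof.
move=> hx hb; rewrite natr_sum; apply: eq_bigr => i _.
by rewrite natrM natrD -binary.
Qed.

Lemma count_act (x : 'rV[R]_n) : PR s x ->
  (#|[pred c : cidx m | active s x c]| + #|FF x| =
   n + active s x (inr false) + active s x (inr true))%N.
Proof.
move=> hx.
rewrite -!sum1_card !big_mkcond /= !big_sumType /= big_bool /=.
have -> : (\sum_(i in FF x) 1 = \sum_(i < n) (frac x i : nat))%N.
  by rewrite big_mkcond /=; apply: eq_bigr => i _; rewrite inE; case: (frac x i).
rewrite !inE /=.
have eA : (\sum_(i < n) (if inl (inl i) \in [pred c : cidx m | active s x c] then 1 else 0) = \sum_(i < n) (if x 0%R i == 0%R then 1 else 0))%N by [].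
have eB : (\sum_(i < n) (if inl (inr i) \in [pred c : cidx m | active s x c] then 1 else 0) = \sum_(i < n) (if x 0%R i == 1%R then 1 else 0))%N by [].
rewrite eA eB.
set A := (\sum_(i < n) (if x 0%R i == 0%R then 1 else 0))%N.
set B := (\sum_(i < n) (if x 0%R i == 1%R then 1 else 0))%N.
set Fs := (\sum_(i < n) (frac x i : nat))%N.
have e : (A + B + Fs = n)%N.
  rewrite /A /B /Fs -!big_split /= -[X in (_ = X)%N]card_ord -sum1_card; apply: eq_bigr => i _.
  rewrite /frac; case: eqP => [->|_]; first by rewrite eq_sym oner_eq0.
  by case: eqP.
move: e; case: (K1lhs s x == _); case: (K2lhs s x == _); lia.
Qed.

Lemma le_k (x : 'rV[R]_n) (q : nat) (B : 'M[R]_(n, q)) : is_vertex s x ->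
  (forall d : 'rV[R]_n, d *m B = 0 -> forall b, active s x (inr b) -> gc (inr b) d = 0) ->
  (#|FF x| <= q)%N.
Proof.
move=> hv hB; rewrite leqNgt; apply/negP => hq.
pose g (t : 'I_q.+1) : 'I_n := enum_val (widen_ord hq t).
have ginj : injective g.
  move=> t1 t2 /enum_val_inj /(congr1 val) /= e; exact: val_inj.
have gF t : g t \in FF x by exact: enum_valP.
pose G : 'M[R]_(q.+1, n) := \matrix_(t, i) (g t == i)%:R.
have [v hv0 hvB] := ker_exists (G *m B) (ltnSn q).
pose d := v *m G.
have dE i : d 0 i = \sum_t v 0 t * (g t == i)%:R.
  by rewrite /d mxE; apply: eq_bigr => t _; rewrite mxE.
have dout i : i \notin FF x -> d 0 i = 0.
  move=> hi; rewrite dE big1 // => t _.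
  case: eqP => [e|]; last by rewrite mulr0.
  by move: hi; rewrite -e gF.
have dg t : d 0 (g t) = v 0 t.
  rewrite dE (bigD1 t) //= eqxx mulr1 big1 ?addr0 // => t' ht'.
  by rewrite (inj_eq ginj) (negbTE ht') mulr0.
apply: (pert (d := d) (hv.1)) => //.
- apply: contra hv0 => /eqP d0; apply/eqP/rowP => t.
  by rewrite -dg d0 !mxE.
- case => [[i|i]|b] ha.
  + rewrite /= dout ?oppr0 //; rewrite inE /frac negb_and negbK.
    by move: ha => /= ->.
  + rewrite /= dout //; rewrite inE /frac negb_and !negbK.
    by move: ha => /= ->; rewrite orbT.
  + apply: hB ha; by rewrite /d -mulmxA hvB.
Qed.

End Pert.

Lemma K1col (R : realType) m (s : 'I_(2 * m) -> nat) (d : 'rV[R]_(2 * m)) :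
  K1lhs s d = (d *m \col_i ((Mbig s)%:R + (s i)%:R)) 0 0.
Proof. by rewrite /K1lhs mxE; apply: eq_bigr => i _; rewrite mxE mulrC. Qed.
Lemma K2col (R : realType) m (s : 'I_(2 * m) -> nat) (d : 'rV[R]_(2 * m)) :
  K2lhs s d = (d *m \col_i ((Mbig s)%:R + (dd s i)%:R)) 0 0.
Proof. by rewrite /K2lhs mxE; apply: eq_bigr => i _; rewrite mxE mulrC. Qed.

Theorem lemma1 (R : realType) (m : nat) (s : 'I_(2 * m) -> nat) :
  (1 <= m)%N ->
  (forall i, (0 < s i)%N) ->
  (forall i, (2 * s i)%N <> smax s) ->
  simple_PR R s.
Proof.
move=> hm hs hne x hv; have hx := hv.1.
have hsS i : (s i <= S_tot s)%N by rewrite /S_tot (bigD1 i) //= leq_addr.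
have hmaxS : (smax s <= S_tot s)%N by apply/bigmax_leqP => i _; exact: hsS.
have hsmax i : (s i <= smax s)%N by exact: leq_bigmax.
have i0 : 'I_(2 * m) by exists 0%N; lia.
have hM2 : (2 <= Mbig s)%N by rewrite /Mbig; have := hsS i0; have := hs i0; lia.
set a1 := active s x (inr false).
set a2 := active s x (inr true).
have hlow : (a1 + a2 <= #|FF x|)%N.
  case: (ltngtP #|FF x| 1) => [f0|f2|f1].
  - have hb i : ~~ frac x i.
      move: f0; rewrite ltnS leqn0 => /eqP/cards0_eq e.
      by have := in_set0 i; rewrite -e inE => ->.
    suff [-> ->] : a1 = false /\ a2 = false by [].
    split; apply/negP.
    + rewrite /a1 /= /K1lhs (lhs_all _ _ hx hb) /K1rhs /eps => /eqP; exact: arith0.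
    + rewrite /a2 /= /K2lhs (lhs_all _ _ hx hb) /K2rhs /eps => /eqP; exact: arith0.
  - move: f2; rewrite /a1 /a2; case: (active s x (inr false)); case: (active s x (inr true)) => /=; lia.
  - have [j hj] : exists j, FF x = [set j] by apply/cards1P/eqP.
    have hb i : i != j -> ~~ frac x i.
      move=> hij; apply/negP => hf; have : i \in FF x by rewrite inE.
      by rewrite hj inE (negbTE hij).
    have : ~~ (a1 && a2).
      apply/negP => /andP []; rewrite /a1 /a2 /= => /eqP e1 /eqP e2.
      rewrite /K1lhs (lhs_split _ _ hx hb) /K1rhs /eps in e1.
      rewrite /K2lhs (lhs_split _ _ hx hb) /K2rhs /eps in e2.
      apply: (arith1 _ _ _ e1 e2).
      + by have := hsS j; rewrite /Mbig; lia.
      + by rewrite /dd /Mbig; lia.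
      + by have := hne j; have := hsmax j; rewrite /dd; lia.
    rewrite f1; case: (a1); case: (a2) => //.
pose ac := \col_i ((Mbig s)%:R + (s i)%:R) : 'cV[R]_(2 * m).
pose bc := \col_i ((Mbig s)%:R + (dd s i)%:R) : 'cV[R]_(2 * m).
have hup : (#|FF x| <= a1 + a2)%N.
  rewrite /a1 /a2; case e1: (active s x (inr false)); case e2: (active s x (inr true)) => /=.
  - apply: leq_trans (le_k (B := row_mx ac bc) hv _) _ => // d.
    rewrite mul_mx_row => /eqP; rewrite row_mx_eq0 => /andP [/eqP h1 /eqP h2] [] _ /=.
    + by rewrite K2col -/bc h2 mxE.
    + by rewrite K1col -/ac h1 mxE.
  - apply: leq_trans (le_k (B := ac) hv _) _ => // d h [] ha /=.
    + by move: e1 e2 ha => /= e1 e2; rewrite ?e1 ?e2.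
    + by rewrite K1col -/ac h mxE.
  - apply: leq_trans (le_k (B := bc) hv _) _ => // d h [] ha /=.
    + by rewrite K2col -/bc h mxE.
    + by move: e1 e2 ha => /= e1 e2; rewrite ?e1 ?e2.
  - apply: leq_trans (le_k (B := (0 : 'M[R]_(2 * m, 0))) hv _) _ => // d h [] ha.
    + by move: e1 e2 ha => /= e1 e2; rewrite ?e1 ?e2.
    + by move: e1 e2 ha => /= e1 e2; rewrite ?e1 ?e2.
have := count_act hx; rewrite -/a1 -/a2 => hc.
move: hlow hup hc; case: (a1); case: (a2) => /=; lia.
Qed.
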